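(* If $n\ge3$, then $$b_{n,i}=b_{n,i-1}+(p-q)b_{n-1,i}+(r-p)b_{n-1,i-1},\qquad 2\le i\le n-1,$$ with $b_{n,1}=(p-q)b_{n-1,1}+q\sum_{j=1}^{n-1}b_{n-1,j}$ and $b_{n,n}=r\sum_{j=1}^{n-1}b_{n-1,j}$ for $n\ge2$, and $b_{1,1}=1$.
   Context: An inversion sequence of length $n$ is a sequence $\rho=\rho_1\cdots\rho_n$ of integers with $1\le \rho_i\le i$ for all $i$; $I_{n,i}$ is the set of those of length $n$ with last letter $i$. A level, descent, or ascent of $\rho$ is an index $i\in[n-1]$ with $\rho_i=\rho_{i+1}$, $\rho_i>\rho_{i+1}$, or $\rho_i<\rho_{i+1}$, respectively. Let $b_{n,i}=b_{n,i}(p,q,r)=\sum_{\rho\in I_{n,i}}p^{\mathrm{lev}(\rho)}q^{\mathrm{des}(\rho)}r^{\mathrm{asc}(\rho)}$. *)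

(* Defs.v *)
From HB Require Import structures.
From mathcomp Require Import all_boot all_order all_algebra.
Set Implicit Arguments. Unset Strict Implicit. Unset Printing Implicit Defensive.
Import GRing.Theory.
Local Open Scope ring_scope.

(* A sequence s = rho_1 ... rho_n (stored 0-indexed: nth 0 s k = rho_{k+1})
   is an inversion sequence iff 1 <= rho_{k+1} <= k+1 for all k < n. *)
Definition is_invseq (s : seq nat) : bool :=
  [forall k : 'I_(size s), (1 <= nth 0 s k <= k.+1)%N].

Definition lev (s : seq nat) : nat :=
  (\sum_(k < (size s).-1) (nth 0 s k == nth 0 s k.+1))%N.
Definition des (s : seq nat) : nat :=
  (\sum_(k < (size s).-1) (nth 0 s k.+1 < nth 0 s k))%N.
Definition asc (s : seq nat) : nat :=
  (\sum_(k < (size s).-1) (nth 0 s k < nth 0 s k.+1))%N.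

(* Every entry of an inversion sequence of length n lies in [1,n], so
   such sequences are exactly the tuples t : n.-tuple 'I_(n.+1) (values
   read as naturals) satisfying is_invseq. *)
Definition b (R : comNzRingType) (p q r : R) (n i : nat) : R :=
  \sum_(t : n.-tuple 'I_n.+1 |
          is_invseq (map val t) && (last 0%N (map val t) == i))
     p ^+ lev (map val t) * q ^+ des (map val t) * r ^+ asc (map val t).

(* Main.v *)
Require Import Defs.
From mathcomp Require Import all_boot all_order all_algebra ring zify.
Import GRing.Theory.
Local Open Scope ring_scope.

Lemma split_tuple (R : comNzRingType) N n (F : seq nat -> R) :
  \sum_(t : n.+1.-tuple 'I_N) F (map val t) =
  \sum_(t : n.-tuple 'I_N) \sum_(x < N) F (rcons (map val t) (val x)).
Proof.
rewrite pair_big /=.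
rewrite (reindex (fun u : n.-tuple 'I_N * 'I_N => [tuple of rcons u.1 u.2])) /=.
  by apply: eq_bigr => u _; rewrite map_rcons.
exists (fun t : n.+1.-tuple 'I_N =>
   ([tuple of belast (thead t) (behead t)], last (thead t) (behead t))).
  move=> [t x] _ /=.
  set T := [tuple of rcons t x].
  have E : rcons (belast (thead T) (behead T)) (last (thead T) (behead T)) = rcons t x.
    by rewrite -lastI; exact: (esym (congr1 val (tuple_eta T))).
  case: (rcons_inj E) => E1 E2.
  by congr pair => //; apply: val_inj.
move=> t _; apply: val_inj => /=.
by rewrite -lastI; exact: (esym (congr1 val (tuple_eta t))).
Qed.

Lemma invseqE s : is_invseq s = all (fun k => 1 <= nth 0 s k <= k.+1)%N (iota 0 (size s)).
Proof.
apply/forallP/allP => [H k | H k].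
  by rewrite mem_iota add0n => /= lt; exact: (H (Ordinal lt)).
by apply: H; rewrite mem_iota add0n /=.
Qed.

Lemma invseq_rcons s x : is_invseq (rcons s x) = is_invseq s && (1 <= x <= (size s).+1)%N.
Proof.
rewrite !invseqE size_rcons -[in iota _ _]addn1 iotaD all_cat /= add0n nth_rcons ltnn eqxx andbT.
congr andb; apply: eq_in_all => k; rewrite mem_iota => /andP[_ lt].
by rewrite nth_rcons lt.
Qed.

Fixpoint IS n : seq (seq nat) :=
  if n is m.+1 then [seq rcons s x | s <- IS m, x <- iota 1 m.+1] else [:: [::]].

Lemma sumK (R : comNzRingType) N n (G : seq nat -> R) : (n < N)%N ->
  \sum_(t : n.-tuple 'I_N) (if is_invseq (map val t) then G (map val t) else 0)
  = \sum_(s <- IS n) G s.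
Proof.
elim: n G => [|n IH] G lt.
  rewrite (big_pred1 [tuple]) => [|t]; last by rewrite /= [t]tuple0; apply/esym/eqP.
  by rewrite invseqE /= big_cons big_nil addr0.
rewrite (@split_tuple _ _ _ (fun s => if is_invseq s then G s else 0)).
transitivity (\sum_(t : n.-tuple 'I_N) (if is_invseq (map val t) then
   (fun s : seq nat => \sum_(x < N) (if (1 <= x <= n.+1)%N then G (rcons s (val x)) else 0)) (map val t) else 0)).
  apply: eq_bigr => t _ /=.
  rewrite (eq_bigr (fun x : 'I_N => if is_invseq (map val t) then
      (if (1 <= x <= n.+1)%N then G (rcons (map val t) x) else 0) else 0)); last first.
    by move=> x _; rewrite invseq_rcons size_map size_tuple; case: is_invseq.
  by case: is_invseq => //; rewrite big1.
rewrite (IH (fun s : seq nat => \sum_(x < N) (if (1 <= x <= n.+1)%N then G (rcons s (val x)) else 0))); last exact: ltnW.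
rewrite -[IS n.+1]/([seq rcons s x | s <- IS n, x <- iota 1 n.+1]) big_allpairs_dep; apply: eq_bigr => s _.
rewrite -[iota 1 n.+1]/(index_iota 1 n.+2) big_geq_mkord -big_mkcond /=.
rewrite (big_ord_widen_cond N (fun i => 0 < i)%N (fun i => G (rcons s i))) //.
Qed.
Set Implicit Arguments. Unset Strict Implicit.

Definition cnt (e : nat -> nat -> bool) (s : seq nat) : nat :=
  (\sum_(k < (size s).-1) e (nth 0 s k) (nth 0 s k.+1))%N.

Lemma cnt_rcons e s x : s != [::] ->
  cnt e (rcons s x) = (cnt e s + e (last 0%N s) x)%N.
Proof.
case: s => [|y s] // _.
rewrite /cnt size_rcons /= big_ord_recr /=.
congr addn.
  apply: eq_bigr => k _ /=.
  have k1 : (k.+1 < size (y :: s))%N by rewrite /= ltnS ltn_ord.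
  have k0 : (k < size (y :: s))%N by apply: ltnW.
  by rewrite -rcons_cons !nth_rcons k0 ltn_ord.
rewrite nth_rcons ltnn eqxx -rcons_cons nth_rcons /= ltnS leqnn.
by rewrite (nth_last 0%N (y :: s)).
Qed.

Definition w (R : comNzRingType) (p q r : R) (s : seq nat) :=
  p ^+ lev s * q ^+ des s * r ^+ asc s.

Definition c (R : comNzRingType) (p q r : R) (j i : nat) : R :=
  if j == i then p else if (i < j)%N then q else r.

Lemma w_rcons (R : comNzRingType) (p q r : R) s x : s != [::] ->
  w p q r (rcons s x) = w p q r s * c p q r (last 0%N s) x.
Proof.
move=> s0.
rewrite /w.
have -> : lev (rcons s x) = (lev s + (last 0%N s == x))%N.
  exact: (cnt_rcons (fun a b => a == b) x s0).
have -> : des (rcons s x) = (des s + (x < last 0%N s))%N.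
  exact: (cnt_rcons (fun a b => b < a)%N x s0).
have -> : asc (rcons s x) = (asc s + (last 0%N s < x))%N.
  exact: (cnt_rcons (fun a b => a < b)%N x s0).
rewrite /c !exprD.
set l := last 0%N s.
by case: (ltngtP l x) => _ /=; rewrite !expr1 !expr0; ring.
Qed.

Lemma IS_mem m s : s \in IS m -> size s = m /\ ((0 < m)%N -> (1 <= last 0%N s <= m)%N).
Proof.
elim: m s => [|m IH] s.
  by rewrite /= inE => /eqP ->.
rewrite -[IS m.+1]/([seq rcons s x | s <- IS m, x <- iota 1 m.+1]).
move=> /allpairsPdep [s' [x [s'in xin ->]]].
have [sz _] := IH _ s'in.
rewrite size_rcons sz last_rcons; split => // _.
by move: xin; rewrite mem_iota add1n ltnS.
Qed.

Definition B (R : comNzRingType) (p q r : R) n i :=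
  \sum_(s <- IS n | last 0%N s == i) w p q r s.

Lemma bE (R : comNzRingType) (p q r : R) n i : b p q r n i = B p q r n i.
Proof.
rewrite /b /B big_mkcond [RHS]big_mkcond -(@sumK _ n.+1 n) //.
apply: eq_bigr => t _.
by case: is_invseq.
Qed.

Lemma Brec (R : comNzRingType) (p q r : R) m i : (0 < m)%N -> (1 <= i <= m.+1)%N ->
  B p q r m.+1 i = \sum_(1 <= j < m.+1) c p q r j i * B p q r m j.
Proof.
move=> m0 hi.
rewrite /B big_mkcond.
rewrite -[IS m.+1]/([seq rcons s x | s <- IS m, x <- iota 1 m.+1]) big_allpairs_dep.
transitivity (\sum_(s <- IS m) \sum_(1 <= j < m.+1) (if j == last 0%N s then c p q r j i * w p q r s else 0)).
  rewrite big_seq [RHS]big_seq; apply: eq_bigr => s sin.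
  have [sz hl] := IS_mem sin.
  have s0 : s != [::] by rewrite -size_eq0 sz -lt0n.
  rewrite -[RHS]big_mkcond big_nat1_eq hl //.
  rewrite -[iota 1 m.+1]/(index_iota 1 m.+2).
  under eq_bigr do rewrite last_rcons.
  rewrite -big_mkcond big_nat1_eq hi w_rcons // mulrC.
  by [].
rewrite exchange_big /=; apply: eq_bigr => j _.
rewrite mulr_sumr [RHS]big_mkcond; apply: eq_bigr => s _.
by rewrite eq_sym; case: (_ == _); rewrite ?mulr0.
Qed.

Lemma sum_ind (R : comNzRingType) (F : nat -> R) a b' i :
  \sum_(a <= j < b') (if j == i then F j else 0) = if (a <= i < b')%N then F i else 0.
Proof. by rewrite -big_mkcond big_nat1_eq. Qed.

Theorem proposition3p9 (R : comNzRingType) (p q r : R) :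
  [/\ b p q r 1 1 = 1,
      (forall n : nat, (2 <= n)%N ->
         b p q r n 1 = (p - q) * b p q r n.-1 1
                       + q * \sum_(1 <= j < n) b p q r n.-1 j),
      (forall n : nat, (2 <= n)%N ->
         b p q r n n = r * \sum_(1 <= j < n) b p q r n.-1 j) &
      (forall n i : nat, (3 <= n)%N -> (2 <= i <= n.-1)%N ->
         b p q r n i = b p q r n i.-1 + (p - q) * b p q r n.-1 i
                       + (r - p) * b p q r n.-1 i.-1)].
Proof.
split.
- rewrite bE /B /= big_cons big_nil /= /w /lev /des /asc /= !big_ord0 !expr0 !mulr1 addr0.
  by [].
- case=> [|[|m]] // _ /=.
  under [\sum_(1 <= j < m.+2) _]eq_bigr do rewrite bE.
  rewrite !bE Brec //.
  rewrite !(@big_ltn _ _ _ 1 m.+2) //.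
  rewrite (eq_big_nat _ _ (F2 := fun j => q * B p q r m.+1 j)); last first.
    by move=> j /andP[h _]; rewrite /c gtn_eqF // h.
  rewrite /c eqxx -mulr_sumr.
  set S := \sum_(_ <= _ < _) _.
  ring.
- case=> [|[|m]] // _ /=.
  under [\sum_(1 <= j < m.+2) _]eq_bigr do rewrite bE.
  rewrite !bE (@Brec _ p q r m.+1 m.+2) //; last by lia.
  rewrite mulr_sumr; apply: eq_big_nat => j /andP[_ h].
  by rewrite /c ltn_eqF // ltnNge ltnW.
- case=> [|[|[|m]]] // i _ hi /=.
  case: i hi => [|[|k]] // hi.
  have m0 : (0 < m.+2)%N by [].
  rewrite !bE (@Brec _ p q r m.+2 k.+2) //; last by lia.
  rewrite (@Brec _ p q r m.+2 k.+1) //; last by lia.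
  rewrite (eq_big_nat _ _ (F2 := fun j => c p q r j k.+1 * B p q r m.+2 j +
     ((if j == k.+2 then (p - q) * B p q r m.+2 j else 0) +
      (if j == k.+1 then (r - p) * B p q r m.+2 j else 0)))); last first.
    move=> j _; rewrite /c.
    have [->|nj2] := eqVneq j k.+2.
      rewrite (gtn_eqF (ltnSn k.+1)) ltnSn /=; ring.
    case: (eqVneq j k.+1) => [ej|nj1].
      subst j.
      have -> : (k.+2 < k.+1)%N = false by lia.
      ring.
    rewrite !addr0.
    have -> : (k.+2 < j)%N = (k.+1 < j)%N by rewrite ltn_neqAle eq_sym nj2.
    by [].
  rewrite !big_split /= !sum_ind.
  have -> : (1 <= k.+2 < m.+3)%N by lia.
  have -> : (1 <= k.+1 < m.+3)%N by lia.
  by rewrite addrA.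
Qed.
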